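(* Let $M$ be an automaton with $\mathit{regular\_ta}(M)$. Then $\mathit{tau\_sim}\ M\ (\mathit{tauclose\_ta}\ M)$.
   Context: Actions are $\mathit{NoAct}$ (silent) and $\mathit{AssAct}\ x\ v$. An edge over node type $N$ is a record $(\mathit{source},\mathit{action},\mathit{dest})$ with source and destination in $N$. An automaton over $N$ is a record with a list $\mathit{nodes}$ of nodes, a list $\mathit{edges}$ of edges, and an initial node $\mathit{init\_s}$. $\mathit{regular\_ta}(M)$ means $\mathit{init\_s}(M)\in\mathit{nodes}(M)$ and every edge of $M$ has source and destination in $\mathit{nodes}(M)$. $\mathit{tauclose\_step}\ M\ s\ X = \{s\}\cup X\cup\{n\in\mathit{nodes}(M) : \exists e\in\mathit{edges}(M).\ \mathit{source}\ e\in X \wedge \mathit{action}\ e=\mathit{NoAct}\wedge \mathit{dest}\ e=n\}$; this is monotone in $X$, and $\mathit{tauclose}\ M\ s$ is its least fixed point. $\mathit{tauclose\_ta}\ M$ is the automaton over sets of nodes with: $\mathit{nodes}$ the list of $\mathit{tauclose}\ M\ n$ for $n\in\mathit{nodes}(M)$; $\mathit{init\_s}=\mathit{tauclose}\ M\ (\mathit{init\_s}\ M)$; $\mathit{edges}$ the list of those edges $(\mathit{source}=\mathit{tauclose}\ M\ n_1,\mathit{action}=a,\mathit{dest}=\mathit{tauclose}\ M\ n_2)$, where $n_1,n_2\in\mathit{nodes}(M)$ and $a$ is the action of some edge of $M$, for which there exist $s_1,s_2$ with $\mathit{tauclose}\ M\ s_1=\mathit{tauclose}\ M\ n_1$, $\mathit{tauclose}\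 M\ s_2=\mathit{tauclose}\ M\ n_2$, $a\neq\mathit{NoAct}$, and some $s\in\mathit{tauclose}\ M\ s_1$ with $(\mathit{source}=s,\mathit{action}=a,\mathit{dest}=s_2)\in\mathit{edges}(M)$. For automata $M_1,M_2$, $\mathit{tau\_sim}\ M_1\ M_2$ holds iff there is a relation $R$ between nodes of $M_1$ and nodes of $M_2$ with $R(\mathit{init\_s}\ M_1,\mathit{init\_s}\ M_2)$ such that whenever $R(s_1,s_2)$ and $(\mathit{source}=s_1,\mathit{action}=a,\mathit{dest}=s_1')\in\mathit{edges}(M_1)$, then either ($a=\mathit{NoAct}$ and $R(s_1',s_2)$) or there is $s_2'$ with $(\mathit{source}=s_2,\mathit{action}=a,\mathit{dest}=s_2')\in\mathit{edges}(M_2)$ and $R(s_1',s_2')$. *)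

(* Defs.v *)
From Stdlib Require Import List ClassicalDescription.
Import ListNotations.
Set Implicit Arguments.

Inductive action (Var Val : Type) : Type :=
| NoAct : action Var Val
| AssAct : Var -> Val -> action Var Val.
Arguments NoAct {Var Val}.
Arguments AssAct {Var Val} _ _.

Record edge (Var Val N : Type) : Type := mkEdge {
  source : N;
  act : action Var Val;
  dest : N }.

Record ta (Var Val N : Type) : Type := mkTa {
  nodes : list N;
  edges : list (edge Var Val N);
  init_s : N }.

Definition regular_ta (Var Val N : Type) (M : ta Var Val N) : Prop :=
  In (init_s M) (nodes M) /\
  (forall e, In e (edges M) -> In (source e) (nodes M) /\ In (dest e) (nodes M)).

Definition tauclose_step (Var Val N : Type) (M : ta Var Val N) (s : N)
  (X : N -> Prop) : N -> Prop :=
  fun n => n = s \/ X n \/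
    (In n (nodes M) /\
     exists e, In e (edges M) /\ X (source e) /\ act e = NoAct /\ dest e = n).

(* Least fixed point (Knaster–Tarski): intersection of all prefixed points. *)
Definition tauclose (Var Val N : Type) (M : ta Var Val N) (s : N) : N -> Prop :=
  fun n => forall X : N -> Prop,
    (forall m, tauclose_step M s X m -> X m) -> X n.

Definition tauclose_edge_cond (Var Val N : Type) (M : ta Var Val N)
  (n1 n2 : N) (a : action Var Val) : Prop :=
  exists s1 s2,
    tauclose M s1 = tauclose M n1 /\ tauclose M s2 = tauclose M n2 /\
    a <> NoAct /\
    exists s, tauclose M s1 s /\ In (mkEdge s a s2) (edges M).

Definition tauclose_ta (Var Val N : Type) (M : ta Var Val N)
  : ta Var Val (N -> Prop) :=
  {| nodes := map (tauclose M) (nodes M);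
     edges :=
       flat_map (fun n1 =>
         flat_map (fun n2 =>
           flat_map (fun a =>
             if excluded_middle_informative (tauclose_edge_cond M n1 n2 a)
             then [mkEdge (tauclose M n1) a (tauclose M n2)]
             else [])
           (map (@act _ _ _) (edges M)))
         (nodes M))
       (nodes M);
     init_s := tauclose M (init_s M) |}.

Definition tau_sim (Var Val N1 N2 : Type) (M1 : ta Var Val N1)
  (M2 : ta Var Val N2) : Prop :=
  exists R : N1 -> N2 -> Prop,
    R (init_s M1) (init_s M2) /\
    forall s1 s2 a s1',
      R s1 s2 -> In (mkEdge s1 a s1') (edges M1) ->
      (a = NoAct /\ R s1' s2) \/
      (exists s2', In (mkEdge s2 a s2') (edges M2) /\ R s1' s2').

(* Main.v *)
Require Import Defs.
From Stdlib Require Import List ClassicalDescription.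

Lemma tc_self (Var Val N : Type) (M : ta Var Val N) s : tauclose M s s.
Proof. intros X H; apply H; left; reflexivity. Qed.

Lemma tc_closed (Var Val N : Type) (M : ta Var Val N) n e :
  tauclose M n (source e) -> In e (edges M) -> act e = NoAct ->
  In (dest e) (nodes M) -> tauclose M n (dest e).
Proof.
  intros Hs He Ha Hd X H. apply H. right; right. split; [exact Hd|].
  exists e. repeat split; auto. apply Hs; exact H.
Qed.

Theorem theorem2 (Var Val N : Type) (M : ta Var Val N) :
  regular_ta M -> tau_sim M (tauclose_ta M).
Proof.
  intros [Hinit Hreg].
  exists (fun s X => In s (nodes M) /\ exists n, In n (nodes M) /\ X = tauclose M n /\ tauclose M n s).
  split.
  - split; [exact Hinit|]. exists (init_s M). repeat split; auto. apply tc_self.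
  - intros s1 X a s1' [Hs1 [n [Hn [HX Htc]]]] He.
    destruct (Hreg _ He) as [_ Hd]; simpl in Hd.
    destruct a as [|x v].
    + left. split; [reflexivity|]. split; [exact Hd|]. exists n. repeat split; auto.
      apply (@tc_closed _ _ _ M n (mkEdge s1 NoAct s1')); auto.
    + right. exists (tauclose M s1'). split.
      * subst X. simpl. apply in_flat_map. exists n. split; [exact Hn|].
        apply in_flat_map. exists s1'. split; [exact Hd|].
        apply in_flat_map. exists (AssAct x v). split.
        -- apply in_map_iff. exists (mkEdge s1 (AssAct x v) s1'). auto.
        -- destruct (excluded_middle_informative _) as [_|Hc]; [left; reflexivity|].
           exfalso; apply Hc. exists n, s1'. repeat split; auto. discriminate.
           exists s1. split; auto.
      * split; [exact Hd|]. exists s1'. repeat split; auto. apply tc_self.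
Qed.
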